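(* For every nonnegative integer $r$, $$\sum_{n=1}^{\infty}\frac{1}{(2n+1)(2n+2r+1)4^n}\frac{\binom{4n}{2n}}{\binom{2n+2r}{n+r}}=\frac{1}{2^{2r-1}}K(r)-\frac{1}{(2r+1)\binom{2r}{r}},$$ where $$K(r)=\frac{16^r}{(4r+1)\binom{4r}{2r}}\left(2+\sqrt{2}\sum_{k=0}^r \frac{\binom{4k}{2k}}{(4k-1)16^k}\right).$$ *)

(* Defs.v *)
From Stdlib Require Import Reals.
From Coquelicot Require Import Coquelicot.
Open Scope R_scope.

Definition binom (n k : nat) : R := Binomial.C n k.

Definition term (r n : nat) : R :=
  / ((2 * INR n + 1) * (2 * INR n + 2 * INR r + 1) * 4 ^ n)
  * (binom (4 * n) (2 * n) / binom (2 * n + 2 * r) (n + r)).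

Definition K (r : nat) : R :=
  16 ^ r / ((4 * INR r + 1) * binom (4 * r) (2 * r))
  * (2 + sqrt 2 * sum_f_R0 (fun k => binom (4 * k) (2 * k) / ((4 * INR k - 1) * 16 ^ k)) r).

(* Main.v *)
Require Import Defs.
From Stdlib Require Import Reals ZArith Lra Lia Psatz.
From Coquelicot Require Import Coquelicot.
Open Scope R_scope.

Definition c (m : nat) : R := INR (fact (2*m)) / (INR (fact m))^2 / 4^m.

Lemma fact_pos' n : 0 < INR (fact n).
Proof. apply lt_0_INR, lt_O_fact. Qed.

Lemma c_pos m : 0 < c m.
Proof.
  unfold c. pose proof (fact_pos' (2*m)). pose proof (fact_pos' m).
  pose proof (pow_lt 4 m ltac:(lra)).
  apply Rdiv_lt_0_compat; [apply Rdiv_lt_0_compat|]; auto. nra.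
Qed.

Lemma c_S m : c (S m) = c m * (2 * INR m + 1) / (2 * INR m + 2).
Proof.
  unfold c.
  replace (2 * S m)%nat with (S (S (2*m))) by lia.
  rewrite !fact_simpl, !mult_INR, !S_INR, mult_INR. simpl (INR 2).
  pose proof (fact_pos' (2*m)). pose proof (fact_pos' m).
  pose proof (pow_lt 4 m ltac:(lra)). pose proof (pos_INR m).
  simpl pow. field. repeat split; lra.
Qed.

Lemma binom_c m : binom (2*m) m = c m * 4^m.
Proof.
  unfold binom, Binomial.C, c.
  replace (2*m - m)%nat with m by lia.
  pose proof (fact_pos' m). pose proof (pow_lt 4 m ltac:(lra)).
  field. lra.
Qed.

Lemma lim_near (x : nat -> R) (l K : R) :
  (forall n, Rabs (x n - l) <= K / (INR n + 1)) -> is_lim_seq x l.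
Proof.
  intros H.
  assert (Hz : is_lim_seq (fun n => / (INR n + 1)) 0).
  { apply is_lim_seq_ext with (fun n => / INR (S n)).
    { intros n; now rewrite S_INR. }
    replace (Finite 0) with (Rbar_inv p_infty) by reflexivity.
    apply is_lim_seq_inv. 2: discriminate.
    now apply (is_lim_seq_incr_1 INR p_infty), is_lim_seq_INR. }
  apply is_lim_seq_le_le with (fun n => l - K * / (INR n + 1)) (fun n => l + K * / (INR n + 1)).
  - intros n. specialize (H n). apply Rabs_le_between in H. unfold Rdiv in H. lra.
  - replace (Finite l) with (Finite (l - K * 0)) by (f_equal; ring).
    apply is_lim_seq_minus'. apply is_lim_seq_const.
    apply is_lim_seq_mult'. apply is_lim_seq_const. exact Hz.
  - replace (Finite l) with (Finite (l + K * 0)) by (f_equal; ring).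
    apply is_lim_seq_plus'. apply is_lim_seq_const.
    apply is_lim_seq_mult'. apply is_lim_seq_const. exact Hz.
Qed.

Lemma tele (f H : nat -> R) (L : R) :
  (forall m, f m = H (S (S m)) - H (S m)) -> is_lim_seq H L -> is_series f (L - H 1%nat).
Proof.
  intros Hf HL.
  unfold is_series. change (is_lim_seq (sum_n f) (L - H 1%nat)).
  apply is_lim_seq_ext with (fun N => H (N + 2)%nat - H 1%nat).
  { induction n.
    - rewrite sum_O, Hf. reflexivity.
    - rewrite sum_Sn, <- IHn, Hf. change (plus ?a ?b) with (a + b).
      replace (S n + 2)%nat with (S (S (S n))) by lia.
      replace (n + 2)%nat with (S (S n)) by lia. ring. }
  apply is_lim_seq_minus'. 2: apply is_lim_seq_const.
  now apply (is_lim_seq_incr_n H 2 L).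
Qed.

Definition u m := c m ^ 2 * (2 * INR m + 1).
Definition v m := c m ^ 2 * (2 * INR m).

Lemma c_S' m : c (S m) * (2 * INR m + 2) = c m * (2 * INR m + 1).
Proof. rewrite c_S. pose proof (pos_INR m). field. lra. Qed.

Lemma u_step m : u (S m) <= u m.
Proof.
  unfold u. pose proof (c_S' m) as E. pose proof (pos_INR m). rewrite S_INR.
  set (x := c m) in *. set (y := c (S m)) in *. set (a := INR m) in *.
  apply (Rmult_le_reg_r ((2*a+2)^2)). nra.
  replace (y ^ 2 * (2 * (a + 1) + 1) * (2 * a + 2) ^ 2) with ((y*(2*a+2))^2 * (2*a+3)) by ring.
  rewrite E. assert (0 <= x^2) by nra. nra.
Qed.

Lemma v_step m : v m <= v (S m).
Proof.
  unfold v. pose proof (c_S' m) as E. pose proof (pos_INR m). rewrite S_INR.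
  set (x := c m) in *. set (y := c (S m)) in *. set (a := INR m) in *.
  apply (Rmult_le_reg_r ((2*a+2))). nra.
  replace (y ^ 2 * (2 * (a + 1)) * (2 * a + 2)) with ((y*(2*a+2))^2) by ring.
  rewrite E. assert (0 <= x^2) by nra. nra.
Qed.

Lemma u_mono m k : u (m + k) <= u m.
Proof.
  induction k. rewrite Nat.add_0_r; lra.
  replace (m + S k)%nat with (S (m+k)) by lia. pose proof (u_step (m+k)). lra.
Qed.

Lemma v_mono m k : v m <= v (m + k).
Proof.
  induction k. rewrite Nat.add_0_r; lra.
  replace (m + S k)%nat with (S (m+k)) by lia. pose proof (v_step (m+k)). lra.
Qed.

Definition d n := c (2*n) / c n.

Lemma d_lim : is_lim_seq d (sqrt 2 / 2).
Proof.
  apply lim_near with 1. intros n.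
  pose proof (sqrt_lt_R0 2 ltac:(lra)) as Hs. pose proof (sqrt_sqrt 2 ltac:(lra)) as Hs2.
  set (s := sqrt 2) in *.
  pose proof (c_pos n). pose proof (c_pos (2*n)). pose proof (pos_INR n).
  assert (Hd : d n * c n = c (2*n)) by (unfold d; field; lra).
  assert (dpos : 0 < d n) by (unfold d; apply Rdiv_lt_0_compat; auto).
  set (D := d n) in *.
  assert (Hup : D^2 * (4 * INR n + 1) <= 2 * INR n + 1).
  { pose proof (u_mono n n) as U. unfold u in U. replace (n+n)%nat with (2*n)%nat in U by lia.
    rewrite mult_INR in U. simpl (INR 2) in U. rewrite <- Hd in U.
    apply (Rmult_le_reg_r (c n ^ 2)). nra. nra. }
  assert (Hlow : 1 <= 2 * D^2).
  { destruct n as [|n].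
    - unfold D, d. simpl. field_simplify. lra. lra.
    - pose proof (v_mono (S n) (S n)) as V. unfold v in V. replace (S n + S n)%nat with (2*S n)%nat in V by lia.
      rewrite mult_INR in V. simpl (INR 2) in V. rewrite <- Hd in V.
      assert (0 < INR (S n)) by (apply lt_0_INR; lia).
      assert (0 < c (S n) ^ 2) by (apply pow_lt; apply c_pos).
      apply (Rmult_le_reg_r (c (S n) ^ 2 * (2 * INR (S n)))). apply Rmult_lt_0_compat; lra.
      replace ((D * c (S n)) ^ 2) with (D^2 * c (S n) ^ 2) in V by ring. lra. }
  assert (Hge : s/2 <= D) by nra.
  assert (Hle : D - s/2 <= 1 / (INR n + 1)).
  { assert (P: (D - s/2) * (D + s/2) <= / (2 * (4 * INR n + 1))).
    { assert (E: (D - s/2)*(D+s/2) = D^2 - (s*s)/4). field. rewrite Hs2 in E. rewrite E.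
      apply (Rmult_le_reg_r (2 * (4 * INR n + 1))). lra.
      rewrite Rinv_l by lra. nra. }
    assert (1 <= D + s/2) by nra.
    apply (Rmult_le_reg_r (INR n + 1)). lra. unfold Rdiv. rewrite Rmult_assoc, Rinv_l by lra.
    apply (Rmult_le_reg_r (2 * (4 * INR n + 1))). lra.
    assert ((D - s/2) <= (D - s/2) * (D + s/2)) by nra.
    assert ((D - s / 2) * (D + s / 2) * (2 * (4 * INR n + 1)) <= 1).
    { apply (Rmult_le_compat_r (2 * (4 * INR n + 1))) in P. rewrite Rinv_l in P by lra. exact P. lra. }
    nra. }
  rewrite Rabs_right by lra. lra.
Qed.

Lemma e_lim r : is_lim_seq (fun n => c n / c (n + r)) 1.
Proof.
  induction r.
  - apply is_lim_seq_ext with (fun _ => 1). intros n. rewrite Nat.add_0_r. pose proof (c_pos n). field; lra.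
    apply is_lim_seq_const.
  - apply is_lim_seq_ext with (fun n => c n / c (n + r) * ((2 * INR (n+r) + 2) / (2 * INR (n+r) + 1))).
    { intros n. replace (n + S r)%nat with (S (n + r)) by lia. rewrite c_S.
      pose proof (c_pos n). pose proof (c_pos (n+r)). pose proof (pos_INR (n+r)). field. lra. }
    replace (Finite 1) with (Finite (1 * 1)) by (f_equal; ring).
    apply is_lim_seq_mult'. exact IHr.
    apply lim_near with 1. intros n. pose proof (pos_INR n). rewrite plus_INR. pose proof (pos_INR r).
    replace ((2 * (INR n + INR r) + 2) / (2 * (INR n + INR r) + 1) - 1) with (1 / (2 * (INR n + INR r) + 1)) by (field; lra).
    rewrite Rabs_right. 2: { apply Rle_ge, Rlt_le, Rdiv_lt_0_compat; lra. }
    unfold Rdiv. rewrite !Rmult_1_l. apply Rinv_le_contravar; lra.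
Qed.

Lemma f_lim r : is_lim_seq (fun n => 2 * INR n / (2 * INR n + 2 * INR r + 1)) 1.
Proof.
  apply lim_near with (2 * INR r + 1). intros n. pose proof (pos_INR n). pose proof (pos_INR r).
  replace (2 * INR n / (2 * INR n + 2 * INR r + 1) - 1) with (- ((2 * INR r + 1) / (2 * INR n + 2 * INR r + 1))) by (field; lra).
  rewrite Rabs_Ropp, Rabs_right. 2: { apply Rle_ge, Rlt_le, Rdiv_lt_0_compat; lra. }
  unfold Rdiv. apply Rmult_le_compat_l. lra. apply Rinv_le_contravar; lra.
Qed.

Definition G r n := 2 * INR n * c (2*n) / (c (n + r) * 4 ^ r * (2 * INR n + 2 * INR r + 1)).

Lemma G_lim r : is_lim_seq (G r) (/ 4 ^ r * (sqrt 2 / 2)).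
Proof.
  apply is_lim_seq_ext with (fun n => / 4 ^ r * (d n * (c n / c (n + r)) * (2 * INR n / (2 * INR n + 2 * INR r + 1)))).
  { intros n. unfold G, d. pose proof (c_pos n). pose proof (c_pos (n+r)). pose proof (pos_INR n). pose proof (pos_INR r).
    pose proof (pow_lt 4 r ltac:(lra)). field. lra. }
  apply is_lim_seq_mult'. apply is_lim_seq_const.
  replace (sqrt 2 / 2) with (sqrt 2 / 2 * 1 * 1) by ring.
  apply is_lim_seq_mult'. apply is_lim_seq_mult'. apply d_lim. apply e_lim. apply f_lim.
Qed.

Lemma term_c r n : term r n = c (2*n) / (c (n + r) * 4 ^ r * ((2 * INR n + 1) * (2 * INR n + 2 * INR r + 1))).
Proof.
  unfold term. replace (4 * n)%nat with (2 * (2 * n))%nat by lia.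
  replace (2 * n + 2 * r)%nat with (2 * (n + r))%nat by lia.
  rewrite !binom_c. rewrite !pow_add.
  replace (4 ^ (2 * n)) with (4 ^ n * 4 ^ n) by (replace (2*n)%nat with (n+n)%nat by lia; symmetry; apply pow_add).
  pose proof (c_pos (2*n)). pose proof (c_pos (n+r)). pose proof (pos_INR n). pose proof (pos_INR r).
  pose proof (pow_lt 4 r ltac:(lra)). pose proof (pow_lt 4 n ltac:(lra)).
  field. repeat split; lra.
Qed.

Lemma c_SS n : c (2 * S n) = c (2*n) * ((4 * INR n + 1) * (4 * INR n + 3)) / ((4 * INR n + 2) * (4 * INR n + 4)).
Proof.
  replace (2 * S n)%nat with (S (S (2*n))) by lia. rewrite !c_S, S_INR, mult_INR. simpl (INR 2).
  pose proof (pos_INR n). field. lra.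
Qed.

Lemma c0 : c 0 = 1.
Proof. unfold c. simpl. field. Qed.

Definition s r := sum_f_R0 (fun k => c (2*k) / (4 * INR k - 1)) r.
Definition Rr r := 2 / (4 ^ r * (4 * INR r + 1) * c (2*r)) * (2 + sqrt 2 * s r) - 1 / ((2 * INR r + 1) * c r * 4 ^ r).

Lemma base : is_series (fun m => term 0 (S m)) (Rr 0).
Proof.
  set (H := fun n => -4 * d n).
  assert (Hl : is_lim_seq H (-4 * (sqrt 2 / 2))).
  { apply is_lim_seq_mult'. apply is_lim_seq_const. apply d_lim. }
  assert (E : forall m, term 0 (S m) = H (S (S m)) - H (S m)).
  { intros m. unfold H, d. rewrite term_c, Nat.add_0_r, (c_SS (S m)), (c_S (S m)).
    pose proof (c_pos (2*S m)). pose proof (c_pos (S m)). pose proof (pos_INR (S m)).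
    simpl pow. change (INR 0) with 0. field. repeat split; lra. }
  assert (T := tele (fun m => term 0 (S m)) H _ E Hl).
  replace (Rr 0) with (-4 * (sqrt 2 / 2) - H 1%nat). exact T.
  unfold Rr, H, d, s. simpl sum_f_R0. simpl (2*0)%nat. simpl (2*1)%nat.
  replace 2%nat with (2*1)%nat by reflexivity. rewrite c_SS. replace 1%nat with (S 0) by reflexivity.
  rewrite c_S. simpl (2*0)%nat. rewrite c0. simpl INR. simpl pow. field.
Qed.

Lemma binom4 k : binom (4*k) (2*k) = c (2*k) * 16 ^ k.
Proof.
  replace (4*k)%nat with (2*(2*k))%nat by lia. rewrite binom_c, pow_mult.
  replace (4^2) with 16 by (simpl; ring). reflexivity.
Qed.

Lemma RHS_eq r : / powerRZ 2 (2 * Z.of_nat r - 1) * K r - / ((2 * INR r + 1) * binom (2 * r) r) = Rr r.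
Proof.
  replace (2 * Z.of_nat r - 1)%Z with (Z.of_nat (2*r) + (-1))%Z by lia.
  rewrite powerRZ_add by lra. rewrite <- pow_powerRZ, pow_mult.
  replace (2^2) with 4 by (simpl; ring). simpl (powerRZ 2 (-1)).
  unfold K, Rr, s. rewrite binom4, binom_c.
  rewrite (sum_eq _ (fun k => c (2*k) / (4 * INR k - 1))).
  2: { intros i _. rewrite binom4. pose proof (pow_lt 16 i ltac:(lra)). pose proof (pos_INR i).
       assert (4 * INR i - 1 <> 0).
       { destruct i. change (INR 0) with 0. lra. rewrite S_INR. pose proof (pos_INR i). lra. }
       field. split; lra. }
  replace (16 ^ r) with (4^r * 4^r) by (rewrite <- Rpow_mult_distr; f_equal; ring).
  pose proof (c_pos r). pose proof (c_pos (2*r)). pose proof (pos_INR r). pose proof (pow_lt 4 r ltac:(lra)).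
  field. repeat split; lra.
Qed.

Lemma step_id r n : (4 * INR r + 3) * (4 * INR r + 5) * term (S r) n - 2 * (INR r + 1) * (2 * INR r + 1) * term r n = G r (S n) - G r n.
Proof.
  rewrite !term_c. unfold G. rewrite c_SS.
  replace (n + S r)%nat with (S (n + r)) by lia. replace (S n + r)%nat with (S (n + r)) by lia.
  rewrite c_S, !S_INR, plus_INR. simpl pow.
  pose proof (c_pos (2*n)). pose proof (c_pos (n+r)). pose proof (pos_INR n). pose proof (pos_INR r).
  pose proof (pow_lt 4 r ltac:(lra)).
  field. repeat split; lra.
Qed.

Lemma main r : is_series (fun m => term r (S m)) (Rr r).
Proof.
  induction r. apply base.
  set (A := / ((4 * INR r + 3) * (4 * INR r + 5))).
  set (B := 2 * (INR r + 1) * (2 * INR r + 1) / ((4 * INR r + 3) * (4 * INR r + 5))).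
  pose proof (pos_INR r).
  assert (T := tele (fun m => G r (S (S m)) - G r (S m)) (G r) _ (fun m => eq_refl) (G_lim r)).
  assert (S1 := is_series_scal A _ _ T).
  assert (S2 := is_series_scal B _ _ IHr).
  assert (S3 := is_series_plus _ _ _ _ S1 S2).
  replace (Rr (S r)) with (plus (scal A (/ 4 ^ r * (sqrt 2 / 2) - G r 1%nat)) (scal B (Rr r))).
  - apply is_series_ext with (2 := S3). intros m. change (plus ?a ?b) with (a + b). change (scal ?a ?b) with (a * b).
    rewrite <- step_id. unfold A, B. match goal with |- ?x = ?y => change (@eq R x y) end. field; lra.
  - change (plus ?a ?b) with (a + b). change (scal ?a ?b) with (a * b).
    match goal with |- ?x = ?y => change (@eq R x y) end.
    unfold A, B, Rr, G, s. rewrite tech5. fold (s r).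
    assert (c2 : c 2 = 3/8). { rewrite (c_S 1), (c_S 0), c0. simpl INR. field. }
    replace (1 + r)%nat with (S r) by lia. replace (2 * 1)%nat with 2%nat by reflexivity. rewrite c2.
    rewrite (c_SS r), c_S. rewrite !S_INR. simpl INR. simpl pow.
    pose proof (c_pos r). pose proof (c_pos (2*r)). pose proof (pow_lt 4 r ltac:(lra)).
    field. repeat split; lra.
Qed.

Theorem theorem4p0p1 (r : nat) :
  is_series (fun m : nat => term r (S m))
    (/ powerRZ 2 (2 * Z.of_nat r - 1)%Z * K r - / ((2 * INR r + 1) * binom (2 * r) r)).
Proof. rewrite RHS_eq. apply main. Qed.
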